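(* Let $T$ be a table and $C_T$ the event-log of Algorithm 2 run on $T$. If a partial witness tree $\tau_S$ occurs in $C_T$, then (1) $\tau_S$ is proper, and (2) $\tau_S$ passes the $T$-check.
   Context: Setting: $\mathcal{P}$ is a finite set of mutually independent discrete random variables with finite domains; $\mathcal{A}$ is a finite set of events determined by them; $\mathrm{vbl}(A)$ is the minimal set of variables determining $A$; the dependency graph joins $A\neq B$ iff $\mathrm{vbl}(A)\cap\mathrm{vbl}(B)\neq\emptyset$; $\Gamma(A)$ is the neighborhood and $\Gamma^+(A)=\Gamma(A)\cup\{A\}$. Binary trees: for each $A\in\mathcal{A}$ a rooted binary tree $\mathbb{B}_A$ is fixed whose vertices are labeled by nonempty subsets of $\mathrm{vbl}(A)$: the root is labeled $\mathrm{vbl}(A)$, leaves are labeled by singletons, and each non-leaf vertex has two children whose labels are disjoint and whose union is its label. $\mathbb{B}_A$ also denotes the set of these labels. Partial witness tree $\tau_S$: a finite rooted tree whose root is labeled by some $S\in\mathbb{B}_A$ for some $A\in\mathcal{A}$, and whose other vertices are labeled by events; each child of the root is labeled by an event $B$ with $\mathrm{vbl}(B)\cap S\ne\emptyset$, and each child of a non-root vertex labeled $B$ is labeled by an element of $\Gamma^+(B)$. The label of a non-root vertex $v$ is written $[v]$. It is proper if the children of every vertex have pairwise distinct labels. Table: $T$ assigns to each variable $p$ a sequence of values $T(p,1),T(p,2),\dots$ in its domain. Algorithm 2 on $T$: set a pointer $t_p=1$ for each $p$; while some event happens under the evaluation $p=T(p,t_p)$ for all $p$, pick one such event $A$ by a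 fixed deterministic rule and increment $t_p$ for every $p\in\mathrm{vbl}(A)$. The event-log $C_T$ is the sequence $C_T(1),C_T(2),\dots$ of events picked in successive iterations. For an event-log $C$, a step $t$ and $S\in\mathbb{B}_{C(t)}$, the tree $\tau_C(t,S)$ is built as follows: start with a single root labeled $S$; for $i=t-1,t-2,\dots,1$: (i) if some non-root vertex $v$ satisfies $C(i)\in\Gamma^+([v])$, choose such a $v$ of maximum distance from the root (ties broken arbitrarily) and attach to it a new child labeled $C(i)$; (ii) otherwise, if $S\cap\mathrm{vbl}(C(i))\ne\emptyset$, attach a new child labeled $C(i)$ to the root; (iii) otherwise do nothing. A partial witness tree $\tau_S$ occurs in $C$ if there is $t$ with $S\in\mathbb{B}_{C(t)}$ and $\tau_S=\tau_C(t,S)$. $T$-check of $\tau_S$: visit the non-root vertices in order of decreasing depth; at a vertex labeled $B$, for each $p\in\mathrm{vbl}(B)$ take the first not-yet-used value of row $p$ of $T$ (row $p$ is consumed in order $T(p,1),T(p,2),\dots$) and check whether $B$ happens under these values. The $T$-check passes if every visited event happens. *)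

(* Defs.v *)
From mathcomp Require Import all_boot.
Set Implicit Arguments. Unset Strict Implicit. Unset Printing Implicit Defensive.

Section MT.
Variable V : finType.
Variable D : V -> finType.

Definition Omega := {dffun forall p : V, D p}.

(* an event is a set of assignments; A happens under w iff w \in A *)

Definition determines (S : {set V}) (A : {set Omega}) : bool :=
  [forall w : Omega, forall w' : Omega,
     [forall p in S, w p == w' p] ==> ((w \in A) == (w' \in A))].

(* vbl(A): the minimal set of variables determining A
   (= intersection of all determining sets, which is itself determining) *)
Definition vbl (A : {set Omega}) : {set V} :=
  \bigcap_(S : {set V} | determines S A) S.

Definition inGp (Acal : {set {set Omega}}) (A B : {set Omega}) : bool :=
  (B == A) || [&& B \in Acal, B != A & vbl A :&: vbl B != set0].

Inductive btree := BLeaf of V | BNode of btree & btree.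

Fixpoint blabel (t : btree) : {set V} :=
  match t with BLeaf p => [set p] | BNode l r => blabel l :|: blabel r end.

Fixpoint blabels (t : btree) : {set {set V}} :=
  match t with
  | BLeaf p => [set [set p]]
  | BNode l r => blabel t |: (blabels l :|: blabels r)
  end.

(* children of every internal vertex have disjoint labels (their union is the
   label of the parent by construction of blabel; leaves are singletons) *)
Fixpoint btree_wf (t : btree) : bool :=
  match t with
  | BLeaf _ => true
  | BNode l r => [disjoint blabel l & blabel r] && btree_wf l && btree_wf r
  end.

Inductive wtree := WNode of {set Omega} & seq wtree.

Definition wlab (t : wtree) := let: WNode a _ := t in a.

(* equality of labelled rooted trees up to reordering of children *)
Inductive teq : wtree -> wtree -> Prop :=
  | teq_node a cs ds : feq cs ds -> teq (WNode a cs) (WNode a ds)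
with feq : seq wtree -> seq wtree -> Prop :=
  | feq_nil : feq [::] [::]
  | feq_cons t t' cs ds1 ds2 :
      teq t t' -> feq cs (ds1 ++ ds2) -> feq (t :: cs) (ds1 ++ t' :: ds2).

(* list of (depth, label) of all vertices; the root of a partial witness tree
   has depth 0, so the forest of its children starts at depth 1 *)
Fixpoint vlistT (d : nat) (t : wtree) : seq (nat * {set Omega}) :=
  let: WNode a cs := t in (d, a) :: flatten (map (vlistT d.+1) cs).
Definition vlistF (d : nat) (F : seq wtree) := flatten (map (vlistT d) F).

Fixpoint properT (t : wtree) : bool :=
  let: WNode _ cs := t in uniq (map wlab cs) && all properT cs.
Definition proper_pwt (F : seq wtree) : bool :=
  uniq (map wlab F) && all properT F.

(* a partial witness tree tau_S is represented by its root label S and the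
   forest F of subtrees hanging from the root *)
Fixpoint pwt_sub (Acal : {set {set Omega}}) (t : wtree) : bool :=
  let: WNode a cs := t in
  all (fun c => inGp Acal a (wlab c)) cs && all (pwt_sub Acal) cs.

Definition is_pwt (Acal : {set {set Omega}}) (BT : {set Omega} -> btree)
    (S : {set V}) (F : seq wtree) : Prop :=
  [/\ exists2 A, A \in Acal & S \in blabels (BT A),
      all (fun v => v.2 \in Acal) (vlistF 1 F),
      all (fun c => vbl (wlab c) :&: S != set0) F
    & all (pwt_sub Acal) F].

(* table: T p i is the value T(p,i), i = 1, 2, ... (T p 0 is unused) *)
Definition evalT (T : forall p : V, nat -> D p) (ptr : V -> nat) : Omega :=
  [ffun p => T p (ptr p)].

Definition alg_step (Acal : {set {set Omega}}) (T : forall p : V, nat -> D p)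
    (rule : seq {set Omega} -> {set {set Omega}} -> {set Omega})
    (st : (V -> nat) * seq {set Omega}) : (V -> nat) * seq {set Omega} :=
  let: (ptr, log) := st in
  let H := [set A in Acal | evalT T ptr \in A] in
  if H == set0 then st
  else let A := rule log H in
       (fun p => ptr p + (p \in vbl A), rcons log A).

(* the first (at most) n entries C_T(1), ..., C_T(n) of the event-log *)
Definition alg_log Acal T rule (n : nat) : seq {set Omega} :=
  (iter n (alg_step Acal T rule) (fun _ => 1, [::])).2.

Fixpoint attachF (Acal : {set {set Omega}}) (B : {set Omega}) (d : nat)
    (F F' : seq wtree) : Prop :=
  match d with
  | 0 => False
  | d'.+1 =>
    exists F1 a cs F2, F = F1 ++ WNode a cs :: F2 /\
      (if d' is 0 then inGp Acal a B /\ F' = F1 ++ WNode a (WNode B [::] :: cs) :: F2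
       else exists cs', attachF Acal B d' cs cs' /\ F' = F1 ++ WNode a cs' :: F2)
  end.

Definition tau_step (Acal : {set {set Omega}}) (S : {set V}) (B : {set Omega})
    (F F' : seq wtree) : Prop :=
  let P := fun v : nat * {set Omega} => inGp Acal v.2 B in
  if has P (vlistF 1 F) then
    attachF Acal B (\max_(v <- vlistF 1 F | P v) v.1) F F'
  else if S :&: vbl B != set0 then F' = WNode B [::] :: F
  else F' = F.

Fixpoint tau_run Acal S (l : seq {set Omega}) (F F' : seq wtree) : Prop :=
  match l with
  | [::] => F' = F
  | B :: l' => exists F1, tau_step Acal S B F F1 /\ tau_run Acal S l' F1 F'
  end.

(* F is a possible forest (under the root labelled S) of tau_C(t, S); the
   events C(t-1), ..., C(1) are processed in this order; C(i) = nth set0 C i.-1 *)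
Definition tauC Acal (C : seq {set Omega}) (t : nat) (S : {set V})
    (F : seq wtree) : Prop :=
  tau_run Acal S (rev (take t.-1 C)) [::] F.

Definition occurs Acal T rule (BT : {set Omega} -> btree) (S : {set V})
    (F : seq wtree) : Prop :=
  exists n t, let C := alg_log Acal T rule n in
    [/\ 0 < t <= size C, S \in blabels (BT (nth set0 C t.-1)) &
        exists2 F0, tauC Acal C t S F0 & feq F F0].

(* visiting the vertices in the order ord; cnt p = number of values of row p
   already used *)
Fixpoint tcheck_from (T : forall p : V, nat -> D p) (cnt : V -> nat)
    (ord : seq (nat * {set Omega})) : bool :=
  match ord with
  | [::] => true
  | (_, B) :: ord' =>
    (evalT T (fun p => (cnt p).+1) \in B) &&
    tcheck_from T (fun p => cnt p + (p \in vbl B)) ord'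
  end.

Definition passes_tcheck (T : forall p : V, nat -> D p) (F : seq wtree) : Prop :=
  forall ord, perm_eq ord (vlistF 1 F) ->
    sorted (fun x y : nat * {set Omega} => y.1 <= x.1) ord ->
    tcheck_from T (fun _ => 0) ord.

End MT.

(* Main.v *)
Require Import Defs.
From mathcomp Require Import all_boot zify.
Set Implicit Arguments. Unset Strict Implicit. Unset Printing Implicit Defensive.

Scheme teq_ind2 := Induction for teq Sort Prop
with feq_ind2 := Induction for feq Sort Prop.

Section A.
Variable V : finType.
Variable D : V -> finType.

Lemma perm_ins (T:eqType) (x:T) s s1 s2 : perm_eq s (s1 ++ s2) -> perm_eq (x :: s) (s1 ++ x :: s2).
Proof. by move=> h; rewrite perm_sym -[x :: s2]cat1s perm_catCA /= perm_cons perm_sym. Qed.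

Lemma vlistF_cat k (F1 F2 : seq (wtree D)) : vlistF k (F1 ++ F2) = vlistF k F1 ++ vlistF k F2.
Proof. by rewrite /vlistF map_cat flatten_cat. Qed.

Lemma vlistF_cons k (t : wtree D) F : vlistF k (t :: F) = vlistT k t ++ vlistF k F.
Proof. by []. Qed.

Lemma teq_feq_props :
  (forall t t' : wtree D, teq t t' ->
     [/\ wlab t = wlab t', Defs.properT t = Defs.properT t' &
         forall k, perm_eq (vlistT k t) (vlistT k t')]) /\
  (forall cs ds : seq (wtree D), feq cs ds ->
     [/\ perm_eq (map (@wlab _ _) cs) (map (@wlab _ _) ds),
         all (@Defs.properT _ _) cs = all (@Defs.properT _ _) ds &
         forall k, perm_eq (vlistF k cs) (vlistF k ds)]).
Proof.
split.
- apply: (@teq_ind2 V D (fun t t' _ => [/\ wlab t = wlab t', Defs.properT t = Defs.properT t' &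
         forall k, perm_eq (vlistT k t) (vlistT k t')])
   (fun cs ds _ => [/\ perm_eq (map (@wlab _ _) cs) (map (@wlab _ _) ds),
         all (@Defs.properT _ _) cs = all (@Defs.properT _ _) ds &
         forall k, perm_eq (vlistF k cs) (vlistF k ds)])).
  + move=> a cs ds _ [h1 h2 h3]; split=> //=.
      by rewrite (perm_uniq h1) h2.
    by move=> k; rewrite perm_cons; apply: h3.
  + by split.
  + move=> t t' cs ds1 ds2 _ [e1 e2 e3] _ [f1 f2 f3]; split.
    * by rewrite map_cat /= e1; apply: perm_ins; rewrite -map_cat.
    * rewrite /= f2 !all_cat /= e2; by case: (Defs.properT t'); case: (all _ ds1); case: (all _ ds2).
    * move=> k; rewrite vlistF_cons !vlistF_cat vlistF_cons.
      rewrite perm_sym -[vlistT k t' ++ _]/(_ ++ _) perm_catCA perm_sym perm_cat // -vlistF_cat //.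
- apply: (@feq_ind2 V D (fun t t' _ => [/\ wlab t = wlab t', Defs.properT t = Defs.properT t' &
         forall k, perm_eq (vlistT k t) (vlistT k t')])
   (fun cs ds _ => [/\ perm_eq (map (@wlab _ _) cs) (map (@wlab _ _) ds),
         all (@Defs.properT _ _) cs = all (@Defs.properT _ _) ds &
         forall k, perm_eq (vlistF k cs) (vlistF k ds)])).
  + move=> a cs ds _ [h1 h2 h3]; split=> //=.
      by rewrite (perm_uniq h1) h2.
    by move=> k; rewrite perm_cons; apply: h3.
  + by split.
  + move=> t t' cs ds1 ds2 _ [e1 e2 e3] _ [f1 f2 f3]; split.
    * by rewrite map_cat /= e1; apply: perm_ins; rewrite -map_cat.
    * rewrite /= f2 !all_cat /= e2; by case: (Defs.properT t'); case: (all _ ds1); case: (all _ ds2).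
    * move=> k; rewrite vlistF_cons !vlistF_cat vlistF_cons.
      rewrite perm_sym -[vlistT k t' ++ _]/(_ ++ _) perm_catCA perm_sym perm_cat // -vlistF_cat //.
Qed.

Lemma mem_wlab_vlist k B (cs : seq (wtree D)) :
  B \in map (@wlab _ _) cs -> (k, B) \in vlistF k cs.
Proof.
elim: cs => //= [[b ds] cs IH]; rewrite in_cons vlistF_cons mem_cat => /orP[/eqP->|/IH->];
  last by rewrite orbT.
by rewrite /= in_cons eqxx.
Qed.

Lemma attach_perm (Acal : {set {set Omega D}}) B d : forall k (F F' : seq (wtree D)),
  attachF Acal B d F F' -> perm_eq (vlistF k F') ((k+d, B) :: vlistF k F).
Proof.
elim: d => [//|d IH] k F F' /= [F1 [a [cs [F2 [-> H]]]]].
case: d IH H => [|d] IH.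
- move=> [_ ->]; apply/permP => P.
  rewrite !vlistF_cat !vlistF_cons /= !count_cat /= addn1 (addnCA (P (k,a))) addnCA //.
- move=> [cs' [/(IH k.+1) h ->]]; apply/permP => P.
  move/permP: h => /(_ P) h.
  rewrite !vlistF_cat !vlistF_cons /= !count_cat /= !count_cat.
  rewrite -[flatten [seq vlistT k.+1 i | i <- cs']]/(vlistF k.+1 cs') h /=.
  rewrite -[flatten [seq vlistT k.+1 i | i <- cs]]/(vlistF k.+1 cs) addSn addnS.
  set x := P _; set y := P (k, a); set z := count P (vlistF k F1).
  rewrite !addnS; lia.
Qed.

Lemma proper_repl (F1 F2 cs cs' : seq (wtree D)) a :
  proper_pwt (F1 ++ WNode a cs :: F2) -> proper_pwt cs' ->
  proper_pwt (F1 ++ WNode a cs' :: F2) /\ proper_pwt cs.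
Proof.
rewrite /proper_pwt !map_cat !all_cat /= => /and4P[-> -> /andP[h1 h2] ->] /andP[h3 h4].
by rewrite h3 h4 h1 h2.

Qed.

Lemma attach_proper (Acal : {set {set Omega D}}) B d : forall k (F F' : seq (wtree D)),
  attachF Acal B d F F' -> (k+d, B) \notin vlistF k F -> proper_pwt F -> proper_pwt F'.
Proof.
elim: d => [//|d IH] k F F' /= [F1 [a [cs [F2 [-> H]]]]] hn hp.
case: d IH H hn => [|d] IH.
- move=> [_ ->] hn.
  suff hc : proper_pwt (WNode B [::] :: cs) by case: (proper_repl hp hc).
  have [_ hcs] := proper_repl hp hp.
  have : B \notin map (@wlab _ _) cs.
    apply: contra hn => /(mem_wlab_vlist k.+1).
    by rewrite vlistF_cat vlistF_cons mem_cat /= in_cons mem_cat addn1 => ->; rewrite !orbT.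
  move: hcs; rewrite /proper_pwt /= => /andP[-> ->] ->; done.
- move=> [cs' [ha ->]] hn.
  have [_ hcs] := proper_repl hp hp.
  suff hc : proper_pwt cs' by case: (proper_repl hp hc).
  apply: (IH k.+1 cs cs' ha _ hcs).
  apply: contra hn => hin.
  rewrite vlistF_cat vlistF_cons mem_cat /= in_cons mem_cat -addSnnS.
  by move: hin; rewrite /vlistF => ->; rewrite !orbT.
Qed.


Lemma evalT_ext (T : forall p : V, nat -> D p) f g : f =1 g -> evalT T f = evalT T g.
Proof. by move=> h; apply/ffunP => p; rewrite !ffunE h. Qed.

Lemma determines_agree S (A : {set Omega D}) (w w' : Omega D) : determines S A ->
  (forall p, p \in S -> w p = w' p) -> (w \in A) = (w' \in A).
Proof.
move/forallP/(_ w)/forallP/(_ w')/implyP => h hS; apply/eqP/h.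
by apply/forallP => p; apply/implyP => /hS ->.
Qed.

Lemma determines_I S1 S2 (A : {set Omega D}) :
  determines S1 A -> determines S2 A -> determines (S1 :&: S2) A.
Proof.
move=> h1 h2; apply/forallP => w; apply/forallP => w'; apply/implyP => /forallP hw.
pose w'' : Omega D := [ffun p => if p \in S1 then w p else w' p].
rewrite (determines_agree (w':=w'') h1); last by move=> p hp; rewrite ffunE hp.
rewrite (determines_agree (w:=w'') (w':=w') h2) //.
move=> p hp2; rewrite ffunE; case: ifP => // hp1.
by have := hw p; rewrite inE hp1 hp2 /= => /eqP.
Qed.

Lemma vbl_det (A : {set Omega D}) : determines (vbl A) A.
Proof.
rewrite /vbl; apply: (big_ind (fun S => determines S A)) => //.
- apply/forallP => w; apply/forallP => w'; apply/implyP => /forallP hw.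
  have -> // : w = w'.
  by apply/ffunP => p; have := hw p; rewrite inE /= => /eqP.
- by move=> x y hx hy; apply: determines_I.
Qed.

Lemma tcheck_lemma (T : forall p : V, nat -> D p) ord : forall cnt,
  (forall k, k < size ord ->
     evalT T (fun p => (cnt p + count (fun y : nat * {set Omega D} => p \in vbl y.2) (take k ord)).+1)
       \in (nth (0, set0) ord k).2) ->
  tcheck_from T cnt ord.
Proof.
elim: ord => //= [[d B] ord IH] cnt h.
apply/andP; split.
  by move: (h 0 isT); rewrite /= (@evalT_ext _ _ (fun p => (cnt p).+1)) // => p; rewrite addn0.
apply: IH => k hk.
move: (h k.+1 hk) => /=.
by rewrite (@evalT_ext _ _ (fun p => (cnt p + (p \in vbl B) + count (fun y : nat * {set Omega D} => p \in vbl y.2) (take k ord)).+1)) // => p; rewrite addnA.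
Qed.

Lemma alg_inv (Acal : {set {set Omega D}}) (T : forall p : V, nat -> D p)
    (rule : seq {set Omega D} -> {set {set Omega D}} -> {set Omega D})
    (hrule : forall (h : seq {set Omega D}) (H : {set {set Omega D}}),
               H != set0 -> rule h H \in H) n :
  let st := iter n (alg_step Acal T rule) (fun _ => 1, [::]) in
  (forall p, st.1 p = 1 + count (fun B => p \in vbl B) st.2) /\
  (forall k, k < size st.2 -> nth set0 st.2 k \in Acal /\
     evalT T (fun p => 1 + count (fun B => p \in vbl B) (take k st.2)) \in nth set0 st.2 k).
Proof.
elim: n => [|n IH] //=.
move: IH; case: (iter n _ _) => ptr log /= [h1 h2].
rewrite /alg_step; case: ifP => [//|/negbT hH].
have := hrule log _ hH; set A := rule log _; rewrite inE => /andP[hA hev].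
split=> /=.
  by move=> p; rewrite h1 -cats1 count_cat /= addn0 addnA.
move=> k; rewrite size_rcons ltnS leq_eqVlt => /orP[/eqP ->|hk].
  rewrite nth_rcons ltnn eqxx -cats1 take_size_cat //; split=> //.
  by rewrite (@evalT_ext _ _ ptr) // => p; rewrite h1.
rewrite nth_rcons hk -cats1 takel_cat; last exact: ltnW.
exact: h2.
Qed.


Section Inv.
Variable Acal : {set {set Omega D}}.
Variable C : seq {set Omega D}.
Hypothesis hC : forall j, j < size C -> nth set0 C j \in Acal.

Definition cc j := nth set0 C j.
Definition sh (A B : {set Omega D}) := vbl A :&: vbl B != set0.
Definition lab (x : nat * nat) := (x.1, cc x.2).

Definition Inv m (F : seq (wtree D)) (L : seq (nat * nat)) :=
 [/\ perm_eq (vlistF 1 F) (map lab L),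
     uniq (map snd L),
     all (fun x => m <= x.2 < size C) L,
     (forall x y, x \in L -> y \in L -> y.2 < x.2 -> sh (cc x.2) (cc y.2) -> x.1 < y.1)
   & (forall x j, x \in L -> m <= j < x.2 -> sh (cc x.2) (cc j) -> j \in map snd L)]
  /\ proper_pwt F.

Lemma inGp_sh a m : m < size C -> sh a (cc m) -> inGp Acal a (cc m).
Proof. by move=> hm hs; rewrite /inGp; case: eqP => //= _; rewrite hC. Qed.

Lemma inGp_refl a : inGp Acal a a.
Proof. by rewrite /inGp eqxx. Qed.

Lemma step_inv S m F F' L : m < size C -> Inv m.+1 F L ->
  tau_step Acal S (cc m) F F' -> exists L', Inv m F' L'.
Proof.
move=> hm [[hperm huniq hall hpw hcomp] hprop].
have hallx : forall x, x \in L -> m.+1 <= x.2 < size C by apply/allP.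
have hnm : m \notin map snd L.
  by apply/mapP => [[x hx e]]; move: (hallx x hx); rewrite -e ltnn.
have hlabin : forall x, x \in L -> lab x \in vlistF 1 F.
  by move=> x hx; rewrite (perm_mem hperm); apply: map_f.
rewrite /tau_step; case: ifP => hP.
- set d := \max_(v <- _ | _) _ => hat.
  have hle : forall x, x \in L -> sh (cc x.2) (cc m) -> x.1 <= d.
    move=> x hx hs; rewrite /d.
    have := @leq_bigmax_seq _ (vlistF 1 F) (fun v : nat * {set Omega D} => inGp Acal v.2 (cc m)) fst (lab x) (hlabin x hx).
    by apply; apply: inGp_sh.
  have hnotin : (1 + d, cc m) \notin vlistF 1 F.
    apply/negP => hin.
    have := @leq_bigmax_seq _ (vlistF 1 F) (fun v : nat * {set Omega D} => inGp Acal v.2 (cc m)) fst _ hin (inGp_refl _).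
    by rewrite -/d /= add1n ltnn.
  exists ((d.+1, m) :: L); split; first split.
  + apply: perm_trans (attach_perm 1 hat) _; by rewrite add1n /= perm_cons.
  + by rewrite /= hnm.
  + rewrite /= leqnn hm /=; apply/allP => x hx; have /andP[h1 ->] := hallx x hx.
    by rewrite ltnW.
  + move=> x y; rewrite !in_cons => /orP[/eqP->|hx] /orP[/eqP->|hy] //=.
    * by rewrite ltnn.
    * by move: (hallx y hy) => /andP[h1 _] hy2; move: (leq_trans h1 (ltnW hy2)); rewrite ltnn.
    * by move=> _ /(hle x hx); rewrite ltnS.
    * exact: hpw.
  + move=> x j; rewrite in_cons => /orP[/eqP->|hx] /=.
      by move=> /andP[h1 h2]; move: (leq_trans h2 h1); rewrite ltnn.
    move=> /andP[h1 h2] hs; rewrite in_cons; case: (eqVneq j m) => [//|hjm] /=.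
    apply: (hcomp x j hx _ hs); rewrite h2 andbT.
    by rewrite ltn_neqAle eq_sym hjm h1.
  + exact: (attach_proper hat hnotin hprop).
- have hnsh : forall x, x \in L -> ~~ sh (cc x.2) (cc m).
    move=> x hx; apply/negP => hs; move/negbT/hasPn: hP => /(_ _ (hlabin x hx)) /=.
    by rewrite inGp_sh.
  case: ifP => _ => [->|->].
  + exists ((1, m) :: L); split; first split.
    * by rewrite /= perm_cons.
    * by rewrite /= hnm.
    * rewrite /= leqnn hm /=; apply/allP => x hx; have /andP[h1 ->] := hallx x hx.
      by rewrite ltnW.
    * move=> x y; rewrite !in_cons => /orP[/eqP->|hx] /orP[/eqP->|hy] //=.
      - by rewrite ltnn.
      - by move: (hallx y hy) => /andP[h1 _] hy2; move: (leq_trans h1 (ltnW hy2)); rewrite ltnn.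
      - by move=> _ hs; move: (hnsh x hx); rewrite hs.
      - exact: hpw.
    * move=> x j; rewrite in_cons => /orP[/eqP->|hx] /=.
        by move=> /andP[h1 h2]; move: (leq_trans h2 h1); rewrite ltnn.
      move=> /andP[h1 h2] hs; rewrite in_cons; case: (eqVneq j m) => [//|hjm] /=.
      apply: (hcomp x j hx _ hs); rewrite h2 andbT.
      by rewrite ltn_neqAle eq_sym hjm h1.
    * rewrite /proper_pwt /= -andbA; move: hprop; rewrite /proper_pwt => /andP[-> ->]; rewrite !andbT.
      apply/negP => /(mem_wlab_vlist 1) hin.
      by move/negbT/hasPn: hP => /(_ _ hin) /=; rewrite inGp_refl.
  + exists L; split; first split => //.
    * apply/allP => x hx; have /andP[h1 ->] := hallx x hx; by rewrite ltnW.
    * move=> x j hx /andP[h1 h2] hs; case: (eqVneq j m) => [ej|hjm].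
        by move: (hnsh x hx); rewrite -ej hs.
      apply: (hcomp x j hx _ hs); rewrite h2 andbT.
      by rewrite ltn_neqAle eq_sym hjm h1.
    * done.
Qed.

Lemma run_inv S m : forall F F' L, m <= size C -> Inv m F L ->
  tau_run Acal S (map cc (rev (iota 0 m))) F F' -> exists L', Inv 0 F' L'.
Proof.
elim: m => [|m IH] F F' L hm hI.
  by move=> /= ->; exists L.
rewrite -addn1 iotaD rev_cat map_cat /= => [[F1 [hs hr]]].
have [L1 hI1] := step_inv hm hI hs.
exact: (IH F1 F' L1 (ltnW hm) hI1 hr).
Qed.

Lemma uniq_snd_inj (L : seq (nat*nat)) x y : uniq (map snd L) -> x \in L -> y \in L -> x.2 = y.2 -> x = y.
Proof.
elim: L => //= a L IH /andP[ha hu]; rewrite !in_cons => /orP[/eqP->|hx] /orP[/eqP->|hy] e //.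
- by move: ha; rewrite e map_f.
- by move: ha; rewrite -e map_f.
- exact: IH.
Qed.

Lemma sh_of p A B : p \in vbl A -> p \in vbl B -> sh A B.
Proof. by move=> hA hB; apply/set0Pn; exists p; rewrite inE hA hB. Qed.

Lemma count_splitb (T : Type) (a b : pred T) s :
  count a s = count (fun y => a y && b y) s + count (fun y => a y && ~~ b y) s.
Proof.
elim: s => //= y s ->; case: (a y); case: (b y) => /=; rewrite ?add0n ?addnS ?addSn //.
Qed.

Lemma tcheck_final (T : forall p : V, nat -> D p)
  (hev : forall k, k < size C ->
     evalT T (fun p => 1 + count (fun B => p \in vbl B) (take k C)) \in cc k)
  F0 L : Inv 0 F0 L -> forall ord, perm_eq ord (vlistF 1 F0) ->
  sorted (fun x y : nat * {set Omega D} => y.1 <= x.1) ord -> tcheck_from T (fun _ => 0) ord.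
Proof.
move=> [[hperm huniq hall hpw hcomp] _] ord hord hsort.
have hallx : forall x, x \in L -> 0 <= x.2 < size C by apply/allP.
have hpo : perm_eq ord (map lab L) := perm_trans hord hperm.
have huL : uniq L by move: huniq; apply: map_uniq.
apply: tcheck_lemma => k hk.
set z := nth (0,set0) ord k.
have : z \in map lab L by rewrite -(perm_mem hpo) mem_nth.
case/mapP => x hx ez.
have /andP[_ hxi] := hallx x hx.
rewrite ez /=.
rewrite (@determines_agree _ _ _ (evalT T (fun p => 1 + count (fun B => p \in vbl B) (take x.2 C))) (vbl_det (cc x.2))); first exact: hev.
move=> p hp; rewrite !ffunE; congr (T p _); rewrite add0n add1n; congr (_.+1).
set d := x.1.
pose Q := fun y : nat * {set Omega D} => p \in vbl y.2.
have htr : transitive (fun x y : nat * {set Omega D} => y.1 <= x.1).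
  by move=> y1 x1 w1 h1 h2; exact: leq_trans h2 h1.
move: hsort; rewrite (sorted_pairwise htr) -{1}(cat_take_drop k ord) pairwise_cat.
case/and3P => /allrelP hrel _ hpd.
have hdrop : drop k ord = z :: drop k.+1 ord by rewrite /z (drop_nth (0, set0)).
have hA : forall y, y \in take k ord -> d <= y.1.
  by move=> y hy; have := hrel y z hy; rewrite hdrop mem_head ez => /(_ isT).
have hD : forall y, y \in drop k ord -> y.1 <= d.
  move=> y; rewrite hdrop in_cons => /orP[/eqP->|hy]; first by rewrite ez.
  move: hpd; rewrite hdrop /= => /andP[/allP /(_ y hy) /=]; by rewrite ez.
rewrite (count_splitb Q (fun y => d < y.1)).
have h0 : count (fun y => Q y && ~~ (d < y.1)) (take k ord) = 0.
  pose R := fun y : nat * {set Omega D} => Q y && (y.1 == d).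
  have -> : count (fun y => Q y && ~~ (d < y.1)) (take k ord) = count R (take k ord).
    apply: eq_in_count => y hy /=; rewrite /R -leqNgt eqn_leq (hA y hy) andbT //.
  have hle1 : count R ord <= 1.
    move/permP: hpo => ->; rewrite count_map -size_filter.
    have -> : 1 = size [:: x] by [].
    apply: uniq_leq_size; first exact: filter_uniq.
    move=> w; rewrite mem_filter /R /Q /= => /andP[/andP[hpw' /eqP hwd] hw].
    rewrite inE; apply/eqP.
    case: (ltngtP w.2 x.2) => hc.
    - by have := hpw x w hx hw hc (sh_of hp hpw'); rewrite hwd ltnn.
    - by have := hpw w x hw hx hc (sh_of hpw' hp); rewrite hwd ltnn.
    - exact: (uniq_snd_inj huniq hw hx hc).
  have hz1 : 1 <= count R (drop k ord).
    by rewrite hdrop /= /R /Q ez /= hp eqxx.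
  move: hle1; rewrite -{1}(cat_take_drop k ord) count_cat.
  by move: hz1; case: (count R (drop k ord)) => // n _; rewrite addnS ltnS leqn0 addn_eq0 => /andP[/eqP -> _].
rewrite h0 addn0.
have -> : count (fun y => Q y && (d < y.1)) (take k ord) = count (fun y => Q y && (d < y.1)) ord.
  rewrite -{2}(cat_take_drop k ord) count_cat.
  rewrite (@eq_in_count _ _ pred0 (drop k ord)) ?count_pred0 ?addn0 //.
  by move=> y hy /=; rewrite ltnNge (hD y hy) andbF.
move/permP: hpo => ->; rewrite count_map.
rewrite (@eq_in_count _ _ (fun w => (p \in vbl (cc w.2)) && (w.2 < x.2))); last first.
  move=> w hw /=; rewrite /Q /=.
  case hpw' : (p \in vbl (cc w.2)) => //=.
  case: (ltngtP w.2 x.2) => hc.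
  - by have := hpw x w hx hw hc (sh_of hp hpw').
  - by have := hpw w x hw hx hc (sh_of hpw' hp) => h; rewrite ltnNge (ltnW h).
  - by rewrite (uniq_snd_inj huniq hw hx hc) ltnn.
have -> : count (fun w => (p \in vbl (cc w.2)) && (w.2 < x.2)) L = count (fun j => (p \in vbl (cc j)) && (j < x.2)) (map snd L) by rewrite count_map.
have -> : count (fun B => p \in vbl B) (take x.2 C) = count (fun j => p \in vbl (cc j)) (iota 0 x.2).
  by rewrite -(map_nth_iota0 set0 (ltnW hxi)) count_map.
rewrite -!size_filter.
apply: perm_size; apply: uniq_perm; rewrite ?filter_uniq ?iota_uniq //.
move=> j; rewrite !mem_filter mem_iota /= add0n.
case hj : (p \in vbl (cc j)) => //=.
case hjx : (j < x.2) => //=.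
exact: (hcomp x j hx hjx (sh_of hp hj)).
Qed.

End Inv.
End A.

Theorem lemma3p1 (V : finType) (D : V -> finType)
    (Acal : {set {set Omega D}})
    (BT : {set Omega D} -> btree V)
    (hBT : forall A, A \in Acal -> btree_wf (BT A) /\ blabel (BT A) = vbl A)
    (T : forall p : V, nat -> D p)
    (rule : seq {set Omega D} -> {set {set Omega D}} -> {set Omega D})
    (hrule : forall (h : seq {set Omega D}) (H : {set {set Omega D}}),
               H != set0 -> rule h H \in H)
    (S : {set V}) (F : seq (wtree D)) :
  is_pwt Acal BT S F -> occurs Acal T rule BT S F ->
  proper_pwt F /\ passes_tcheck T F.
Proof.
move=> _; rewrite /occurs => -[n [t /= [/andP[ht0 htC] _ [F0 hrun hfeq]]]].
have [h1 h2] := alg_inv Acal T hrule n.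
set C := alg_log Acal T rule n in htC hrun.
have hC : forall j, j < size C -> nth set0 C j \in Acal by move=> j hj; case: (h2 j hj).
have hev : forall k, k < size C ->
     evalT T (fun p => 1 + count (fun B => p \in vbl B) (take k C)) \in cc C k.
  by move=> k hk; case: (h2 k hk).
have ht1 : t.-1 <= size C by apply: leq_trans (leq_pred t) htC.
have hI0 : Inv C t.-1 [::] [::] by split; [split|] => //=.
rewrite /tauC -(map_nth_iota0 set0 ht1) -map_rev in hrun.
have [L hL] := run_inv hC ht1 hI0 hrun.
have [_ hfp] := @teq_feq_props V D; have [hw hpa hvl] := hfp _ _ hfeq.
split.
- rewrite /proper_pwt (perm_uniq hw) hpa; exact: hL.2.
- move=> ord hord hsort; apply: (tcheck_final hev hL) => //.
  exact: perm_trans hord (hvl 1).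
Qed.
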